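(* Let $F$ be a graph and $r\ge 2$ an integer. There is a constant $C=C(F,r)$ such that for every $n$ and every $n$-vertex $r$-uniform hypergraph $\mathcal{H}$ that is $\mathrm{Tr}(F)$-free, the shadow graph of $\mathcal{H}$ contains at most $C\,n^{|V(F)|-1}$ copies of $F$.
   Context: The shadow graph of a hypergraph $\mathcal{H}$ has vertex set $V(\mathcal{H})$, with $uv$ an edge if and only if some hyperedge of $\mathcal{H}$ contains both $u$ and $v$. $\mathrm{Tr}(F)$ denotes the family of $r$-uniform hypergraphs $\mathcal{F}$ for which $V(F)\subseteq V(\mathcal{F})$ and there is a bijection $f$ from the edges of $F$ to the hyperedges of $\mathcal{F}$ with $f(e)\cap V(F)=e$ for every edge $e$ of $F$. An $r$-uniform hypergraph is $\mathrm{Tr}(F)$-free if it contains no subhypergraph isomorphic to a member of $\mathrm{Tr}(F)$. Copies of $F$ are not necessarily induced subgraphs. *)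

(* Defs.v *)
From mathcomp Require Import all_boot.
Set Implicit Arguments. Unset Strict Implicit. Unset Printing Implicit Defensive.

Definition is_graph (V : finType) (E : {set {set V}}) : Prop :=
  forall e, e \in E -> #|e| = 2.

Definition is_uniform (V : finType) (r : nat) (H : {set {set V}}) : Prop :=
  forall h, h \in H -> #|h| = r.

Definition shadow (n : nat) (H : {set {set 'I_n}}) : {set {set 'I_n}} :=
  [set e : {set 'I_n} | (#|e| == 2) && [exists h in H, e \subset h]].

Definition embeddings (VF : finType) (EF : {set {set VF}}) (n : nat)
    (G : {set {set 'I_n}}) : {set {ffun VF -> 'I_n}} :=
  [set f : {ffun VF -> 'I_n} | injectiveb f && [forall e : {set VF}, (e \in EF) ==> (f @: e \in G)]].

(* copies of F in G: the (not necessarily induced) subgraphs of G isomorphic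
   to F, each recorded as (vertex set, edge set) *)
Definition copies (VF : finType) (EF : {set {set VF}}) (n : nat)
    (G : {set {set 'I_n}}) : {set {set 'I_n} * {set {set 'I_n}}} :=
  (fun f : {ffun VF -> 'I_n} => (f @: [set: VF], [set f @: e | e : {set VF} in EF]))
    @: embeddings EF G.

(* H contains (a subhypergraph isomorphic to) a member of Tr(F):
   an injective vertex map phi of V(F) into V(H) and an injective map g from
   E(F) into the hyperedges of H with g(e) ∩ phi(V(F)) = phi(e). *)
Definition contains_Tr (VF : finType) (EF : {set {set VF}}) (n : nat)
    (H : {set {set 'I_n}}) : Prop :=
  exists (phi : VF -> 'I_n) (g : {set VF} -> {set 'I_n}),
    [/\ injective phi, {in EF &, injective g},
        forall e, e \in EF -> g e \in H &
        forall e, e \in EF -> g e :&: (phi @: [set: VF]) = phi @: e].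

Definition Tr_free (VF : finType) (EF : {set {set VF}}) (n : nat)
    (H : {set {set 'I_n}}) : Prop := ~ contains_Tr EF H.

(* Main.v *)
Require Import Defs.
From mathcomp Require Import all_boot.

Set Implicit Arguments. Unset Strict Implicit. Unset Printing Implicit Defensive.

Lemma card_bigcup_le (T I : finType) (P : pred I) (A : I -> {set T}) :
  #|\bigcup_(i | P i) A i| <= \sum_(i | P i) #|A i|.
Proof.
pose K := fun (X : {set T}) (m : nat) => is_true (#|X| <= m).
apply: (@big_rec2 _ _ K); first by rewrite /K cards0.
rewrite /K.
move=> i X m _ h.
apply: leq_trans (leq_card_setU (A i) X) _; exact: leq_add.
Qed.

Definition hset (n : nat) (H : {set {set 'I_n}}) (A : {set 'I_n}) : {set 'I_n} :=
  odflt set0 [pick h in H | A \subset h].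

Lemma hset_card n (H : {set {set 'I_n}}) r A : is_uniform r H -> #|hset H A| <= r.
Proof.
move=> hu; rewrite /hset; case: pickP => [h /andP [hH _]|_] /=.
  by rewrite hu.
by rewrite cards0.
Qed.

Lemma bad_embedding (VF : finType) (EF : {set {set VF}}) n (H : {set {set 'I_n}}) f :
  Tr_free EF H -> f \in embeddings EF (shadow H) ->
  [exists e, exists w, [&& e \in EF, w \notin e & f w \in hset H (f @: e)]].
Proof.
move=> htr; rewrite inE => /andP [/injectiveP finj /forallP fE].
case: (boolP [exists e, _]) => // /existsPn hno; exfalso; apply: htr.
have hsh : forall e, e \in EF -> exists2 h, h \in H & f @: e \subset h.
  move=> e eE; move: (implyP (fE e) eE); rewrite inE => /andP [_ /existsP [h /andP [hH hs]]].
  by exists h.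
have hsub : forall e, e \in EF -> (hset H (f @: e) \in H) && (f @: e \subset hset H (f @: e)).
  move=> e eE; rewrite /hset; case: pickP => [h /andP [hH hs]|hn] /=.
    by rewrite hH hs.
  by case: (hsh e eE) => h hH hs; move: (hn h); rewrite hH hs.
have hint : forall e, e \in EF -> hset H (f @: e) :&: (f @: [set: VF]) = f @: e.
  move=> e eE; apply/setP => x; rewrite inE.
  apply/andP/idP => [[xh /imsetP [w _ xeq]]|xe]; first subst x.
    case: (boolP (w \in e)) => we; first by apply: imset_f.
    move/existsPn: (hno e) => /(_ w); by rewrite eE we xh.
  split; first by move/andP: (hsub e eE) => [_ /subsetP]; apply.
  move/imsetP: xe => [w _ ->]; exact: imset_f.
exists f, (fun e : {set VF} => hset H (f @: e)); split => //.
- move=> e1 e2 e1E e2E heq; apply: (imset_inj finj).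
  by rewrite /= -(hint e1 e1E) -(hint e2 e2E) heq.
- by move=> e eE; case/andP: (hsub e eE).
Qed.

Section Count.
Variables (VF : finType) (n : nat) (H : {set {set 'I_n}}) (r : nat).
Hypothesis hu : is_uniform r H.
Variables (e : {set VF}) (w : VF).
Hypothesis we : w \notin e.

Definition Sub := {x : VF | x != w}.
Definition rest (f : {ffun VF -> 'I_n}) : {ffun Sub -> 'I_n} := [ffun x => f (val x)].
Definition Bset := [set f : {ffun VF -> 'I_n} | f w \in hset H (f @: e)].
Definition Fib g := [set f in Bset | rest f == g].

Lemma Fib_card g : #|Fib g| <= r.
Proof.
case: (set_0Vmem (Fib g)) => [->|[f0 f0F]]; first by rewrite cards0.
have agree : forall f, f \in Fib g -> forall x, x != w -> f x = f0 x.
  move=> f fF x xw; move: fF f0F; rewrite !inE => /andP [_ /eqP <-] /andP [_ /eqP h].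
  have := congr1 (fun k : {ffun Sub -> 'I_n} => k (exist _ x xw)) h.
  by rewrite /rest /= !ffunE /= => ->.
have img : forall f, f \in Fib g -> f @: e = f0 @: e.
  move=> f fF; apply: eq_in_imset => x xe; apply: agree => //.
  by apply: contraNneq we => <-.
apply: leq_trans (hset_card (f0 @: e) hu).
rewrite -(card_in_imset (f := fun f : {ffun VF -> 'I_n} => f w) (D := Fib g)).
  apply: subset_leq_card; apply/subsetP => y /imsetP [f fF ->].
  move: (fF); rewrite !inE => /andP [fw _]; rewrite -(img f fF). exact: fw.
move=> f1 f2 f1F f2F /= h; apply/ffunP => x.
case: (eqVneq x w) => [->//|xw].
by rewrite (agree f1 f1F x xw) (agree f2 f2F x xw).
Qed.

Lemma Bset_card : #|Bset| <= r * n ^ (#|VF| - 1).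
Proof.
have sub : Bset \subset \bigcup_(g : {ffun Sub -> 'I_n}) Fib g.
  apply/subsetP => f fB; apply/bigcupP; exists (rest f) => //.
  by rewrite inE fB eqxx.
apply: leq_trans (subset_leq_card sub) _.
apply: leq_trans (card_bigcup_le _ _) _.
apply: (@leq_trans (\sum_(g : {ffun Sub -> 'I_n}) r)).
  by apply: leq_sum => g _; exact: Fib_card.
rewrite sum_nat_const card_ffun card_ord card_sig.
have -> : #|[pred x | x != w]| = #|VF| - 1.
  by rewrite subn1 -(cardC1 w); apply: eq_card => x; rewrite !inE.
by rewrite mulnC.
Qed.
End Count.

Theorem proposition4 (VF : finType) (EF : {set {set VF}}) (r : nat) :
  is_graph EF -> 2 <= r ->
  exists C : nat, forall (n : nat) (H : {set {set 'I_n}}),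
    is_uniform r H -> Tr_free EF H ->
    #|copies EF (shadow H)| <= C * n ^ (#|VF| - 1).
Proof.
move=> _ _; exists (#|{: {set VF} * VF}| * r) => n H hu htr.
apply: leq_trans (leq_imset_card _ _) _.
have sub : embeddings EF (shadow H) \subset
    \bigcup_(p : {set VF} * VF | p.2 \notin p.1) Bset H p.1 p.2.
  apply/subsetP => f fE; have := bad_embedding htr fE.
  case/existsP => e /existsP [w /and3P [_ wn fw]].
  apply/bigcupP; exists (e, w) => //; by rewrite inE.
apply: leq_trans (subset_leq_card sub) _.
apply: leq_trans (card_bigcup_le _ _) _.
apply: (@leq_trans (\sum_(p : {set VF} * VF) (r * n ^ (#|VF| - 1)))).
  rewrite big_mkcond /=; apply: leq_sum => p _.
  by case: ifP => hp //; exact: Bset_card.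
by rewrite sum_nat_const -mulnA.
Qed.
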